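(* Let $\mathcal F$ be a compact subset of $C(\mathbf X)$ and $\gamma>0$ be such that $$L:=\limsup_{\epsilon\to0}\frac{\mathcal H_\epsilon(\mathcal F)}{(1/\epsilon)^\gamma}\in(0,\infty).$$ There exists a strategy for Predictor such that for every $F\in\mathcal F$ there is $N_0$ (depending on $F$ but not on Reality's moves) such that for all $N\ge N_0$ and all moves of Reality $$\sum_{n=1}^N(y_n-\mu_n)^2\le\sum_{n=1}^N(y_n-F(x_n))^2+CL^{\frac1{\gamma+1}}N^{\frac\gamma{\gamma+1}},$$ where $C$ is a universal constant.
   Context: Protocol: $\mathbf X$ a nonempty topological space; at each round $n$ Reality announces $x_n\in\mathbf X$, Predictor announces $\mu_n\in\mathbb R$, Reality announces $y_n\in[-1,1]$; a strategy for Predictor maps each history $(x_1,y_1,\dots,x_{n-1},y_{n-1},x_n)$ to $\mu_n$. $C(\mathbf X)$: bounded continuous real functions with supremum norm. $\mathcal H_\epsilon(A)$: $\log_2$ of the minimal number of points of $A$ forming an $\epsilon$-net for $A$ in the supremum metric. *)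

(* Defs.v *)
From mathcomp Require Import all_boot all_order all_algebra.
From mathcomp Require Import all_classical all_reals all_analysis.
Set Implicit Arguments. Unset Strict Implicit. Unset Printing Implicit Defensive.
Import Order.TTheory GRing.Theory Num.Theory.
Import numFieldNormedType.Exports.
Local Open Scope classical_set_scope.
Local Open Scope ring_scope.

Section Defs.
Context {R : realType} {X : topologicalType}.

(* Membership of F in C(X): bounded continuous real functions. *)
Definition bounded_continuous (f : X -> R) : Prop :=
  continuous f /\ exists M : R, forall x, `|f x| <= M.

Definition sup_close (e : R) (f g : X -> R) : Prop :=
  forall x, `|f x - g x| <= e.

Definition has_net (A : set (X -> R)) (e : R) (n : nat) : Prop :=
  exists g : 'I_n -> (X -> R),
    (forall i, A (g i)) /\ forall f, A f -> exists i, sup_close e f (g i).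

(* Minimal number of points of A forming an e-net for A (0 if none exists). *)
Definition net_number (A : set (X -> R)) (e : R) : nat :=
  match pselect (exists n, has_net A e n) with
  | left h => ex_minn (P := fun n => `[< has_net A e n >])
                 (let: ex_intro n hn := h in ex_intro _ n (asboolT hn))
  | right _ => 0%N
  end.

Definition metric_entropy (A : set (X -> R)) (e : R) : R :=
  ln (net_number A e)%:R / ln 2.

End Defs.

Definition limsup0 {R : realType} (g : R -> R) : \bar R :=
  ereal_inf [set ereal_sup [set (g e)%:E | e in [set e | 0 < e < d]]
            | d in [set d : R | 0 < d]].

(* Predictor strategy: history (x_1,y_1,...,x_{n-1},y_{n-1}) and x_n |-> mu_n. *)
Definition strategy (R : realType) (X : Type) := seq (X * R) -> X -> R.

(* Predictor's move at round n (0-indexed) against Reality's sequences x, y. *)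
Definition pred_move {R : realType} {X : Type} (S : strategy R X)
  (x : nat -> X) (y : nat -> R) (n : nat) : R :=
  S [seq (x i, y i) | i <- iota 0 n] (x n).

(* Main.v *)
Require Import Defs.
From mathcomp Require Import all_boot all_order all_algebra.
From mathcomp Require Import all_classical all_reals all_analysis.
From mathcomp Require Import ring lra.
Import Order.TTheory GRing.Theory Num.Theory.
Import numFieldNormedType.Exports.

Local Open Scope ring_scope.
Lemma wavg_itv {R : realType} {K : nat} (v p : 'I_K -> R) :
  (forall i, 0 <= v i) -> (forall i, -1 <= p i <= 1) ->
  -1 <= (\sum_i v i * p i) / (\sum_i v i) <= 1.
Proof.
move=> v0 p1.
have S0 : 0 <= \sum_i v i by apply: sumr_ge0 => i _.
have [->|Sn0] := eqVneq (\sum_i v i) 0; first by rewrite invr0 mulr0; lra.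
have Sp : 0 < \sum_i v i by rewrite lt_def Sn0.
rewrite ler_pdivlMr // ler_pdivrMr //.
have h1 : \sum_i v i * -1 <= \sum_i v i * p i.
  apply: ler_sum => i _; have := p1 i; have := v0 i; nra.
have h2 : \sum_i v i * p i <= \sum_i v i * 1.
  apply: ler_sum => i _; have := p1 i; have := v0 i; nra.
move: h1 h2; rewrite -!mulr_suml mulrN1 mulr1 => h1 h2.
apply/andP; split; lra.
Qed.
Lemma tangent_ineq {R : realType} (y p mu : R) :
  -1 <= y <= 1 -> -1 <= p <= 1 -> -1 <= mu <= 1 ->
  expR (- (y - p) ^+ 2 / 32) <=
  expR (- (y - mu) ^+ 2 / 32) * (1 + (y - mu) * (p - mu) / 16).
Proof.
move=> /andP[y1 y2] /andP[p1 p2] /andP[m1 m2].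
set b := y - mu; set d := p - mu.
have hb : b ^+ 2 <= 4 by rewrite /b; nra.
have hd : d ^+ 2 <= 4 by rewrite /d; nra.
have hbd : -4 <= b * d by rewrite /b /d; nra.
set s := b * d / 16.
set t := s - d ^+ 2 / 32.
have -> : - (y - p) ^+ 2 / 32 = - b ^+ 2 / 32 + t.
  by rewrite /t /s /b /d; field.
rewrite expRD ler_pM2l ?expR_gt0 //.
have ht : 0 < 1 - t by rewrite /t /s; nra.
have hs : 0 < 1 + s by rewrite /s; nra.
have key : 1 <= (1 - t) * (1 + s).
  have e : (1 - t) * (1 + s) = 1 + d ^+ 2 * (1 + s) / 32 - s ^+ 2
    by rewrite /t; field.
  rewrite e /s; nra.
have h1 : 1 - t <= expR (- t) by have := expR_ge1Dx (- t); rewrite addrC -[_ + _]/(- t + 1) addrC.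
have h2 : expR t * expR (- t) = 1 by rewrite -expRD subrr expR0.
have e0 := expR_gt0 t.
have e1 := expR_gt0 (- t).
nra.
Qed.

Lemma mix_ineq {R : realType} {K : nat} (v p : 'I_K -> R) (y : R) :
  (forall i, 0 <= v i) -> (forall i, -1 <= p i <= 1) -> -1 <= y <= 1 ->
  \sum_i v i * expR (- (y - p i) ^+ 2 / 32) <=
  expR (- (y - (\sum_i v i * p i) / (\sum_i v i)) ^+ 2 / 32) * \sum_i v i.
Proof.
move=> v0 p1 y1.
set mu := (\sum_i v i * p i) / (\sum_i v i).
have m1 : -1 <= mu <= 1 by apply: wavg_itv.
have S0 : 0 <= \sum_i v i by apply: sumr_ge0 => i _.
have [S00|Sn0] := eqVneq (\sum_i v i) 0.
  have vz : forall i, v i = 0.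
    move=> i; apply/eqP; rewrite eq_le v0 andbT.
    by rewrite -S00 (bigD1 i) //= lerDl sumr_ge0.
  by rewrite S00 mulr0 big1 // => i _; rewrite vz mul0r.
have e : \sum_i v i * p i = mu * \sum_i v i.
  by rewrite /mu mulrAC -mulrA divff ?mulr1.
apply: (@le_trans _ _ (\sum_i v i * (expR (- (y - mu) ^+ 2 / 32) * (1 + (y - mu) * (p i - mu) / 16)))).
  apply: ler_sum => i _; apply: ler_wpM2l => //; exact: tangent_ineq.
set E := expR _; set c := (y - mu) / 16.
have -> : \sum_i v i * (E * (1 + (y - mu) * (p i - mu) / 16)) =
   \sum_i (E * v i + ((E * c) * (v i * p i) - (E * c * mu) * v i)).
  by apply: eq_bigr => i _; rewrite /c; ring.
rewrite big_split sumrB /= -!mulr_sumr e.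
by rewrite mulrA subrr addr0.
Qed.

Definition ewa_w {R : realType} {K : nat} (p : nat -> 'I_K -> R) (y : nat -> R)
  (a n : nat) (i : 'I_K) : R :=
  expR (- (\sum_(a <= s < n) (y s - p s i) ^+ 2) / 32).

Definition ewa_mu {R : realType} {K : nat} (p : nat -> 'I_K -> R) (y : nat -> R)
  (a n : nat) : R :=
  (\sum_i ewa_w p y a n i * p n i) / (\sum_i ewa_w p y a n i).

Lemma ewa_mu_itv {R : realType} {K : nat} (p : nat -> 'I_K -> R) (y : nat -> R) a n :
  (forall s i, -1 <= p s i <= 1) -> -1 <= ewa_mu p y a n <= 1.
Proof. by move=> hp; apply: wavg_itv => // i; rewrite /ewa_w ltW ?expR_gt0. Qed.

Lemma ewa_pot {R : realType} {K : nat} (p : nat -> 'I_K -> R) (y : nat -> R) a n :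
  (forall s i, -1 <= p s i <= 1) -> (forall s, -1 <= y s <= 1) -> (a <= n)%N ->
  \sum_i ewa_w p y a n i <=
  K%:R * expR (- (\sum_(a <= s < n) (y s - ewa_mu p y a s) ^+ 2) / 32).
Proof.
move=> hp hy /subnK <-; elim: (n - a)%N => [|k IH].
  rewrite add0n big_geq // oppr0 mul0r expR0 mulr1.
  rewrite (eq_bigr (fun _ => 1)) ?sumr_const ?card_ord //.
  by move=> i _; rewrite /ewa_w big_geq // oppr0 mul0r expR0.
have ak : (a <= k + a)%N by rewrite leq_addl.
rewrite addSn big_nat_recr //=.
have -> : \sum_i ewa_w p y a (k + a).+1 i =
  \sum_i ewa_w p y a (k + a) i * expR (- (y (k + a) - p (k + a) i) ^+ 2 / 32).
  apply: eq_bigr => i _; rewrite /ewa_w big_nat_recr //= -expRD; congr expR.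
  by rewrite opprD mulrDl.
have w0 : forall j, 0 <= ewa_w p y a (k + a) j by move=> j; rewrite /ewa_w ltW ?expR_gt0.
have p0 : forall j, -1 <= p (k + a) j <= 1 by move=> j; apply: hp.
apply: le_trans (mix_ineq (fun j => ewa_w p y a (k + a) j) (p (k + a)) (y (k + a)) w0 p0 (hy _)) _.
rewrite -/(ewa_mu p y a (k + a)) mulrC.
rewrite opprD mulrDl expRD mulrA.
apply: ler_wpM2r; first by rewrite ltW ?expR_gt0.
by [].  
Qed.

Lemma ewa_regret {R : realType} {K : nat} (p : nat -> 'I_K -> R) (y : nat -> R) a n i :
  (forall s i, -1 <= p s i <= 1) -> (forall s, -1 <= y s <= 1) -> (a <= n)%N ->
  \sum_(a <= s < n) (y s - ewa_mu p y a s) ^+ 2 <=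
  \sum_(a <= s < n) (y s - p s i) ^+ 2 + 32 * ln (K%:R : R).
Proof.
move=> hp hy an.
have K0 : (0 < K)%N := leq_ltn_trans (leq0n _) (ltn_ord i).
have Kp : (0 : R) < K%:R by rewrite ltr0n.
have h := ewa_pot p y a n hp hy an.
have h2 : ewa_w p y a n i <= \sum_i ewa_w p y a n i.
  by rewrite (bigD1 i) //= lerDl sumr_ge0 // => j _; rewrite ltW ?expR_gt0.
have h3 := le_trans h2 h.
move: h3; rewrite /ewa_w -ler_ln ?posrE ?mulr_gt0 ?expR_gt0 //.
rewrite lnM ?posrE ?expR_gt0 // !expRK.
set A := \sum_(a <= s < n) _; set B := \sum_(a <= s < n) _.
move=> h4; lra.
Qed.
Definition clip {R : realType} (v : R) : R :=
  if v < -1 then -1 else if 1 < v then 1 else v.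

Lemma clip_itv {R : realType} (v : R) : -1 <= clip v <= 1.
Proof. rewrite /clip; case: ifP => h1; [lra|case: ifP => h2]; [lra|].
by move: h1 h2 => /negbT; rewrite -leNgt => h1 /negbT; rewrite -leNgt => h2; lra.
Qed.

Lemma clip_cases {R : realType} (v : R) :
  (v < -1 /\ clip v = -1) \/ (1 < v /\ clip v = 1) \/ (-1 <= v <= 1 /\ clip v = v).
Proof.
rewrite /clip; case: ifP => h1; [by left|case: ifP => h2]; [by right; left|].
right; right; split => //.
by move: h1 h2 => /negbT; rewrite -leNgt => h1 /negbT; rewrite -leNgt => h2; lra.
Qed.

Lemma clip_cmp {R : realType} (y f g e : R) :
  -1 <= y <= 1 -> `|f - g| <= e -> e <= 1 ->
  (y - clip g) ^+ 2 <= (y - f) ^+ 2 + 5 * e.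
Proof.
move=> /andP[y1 y2] hfg e1.
have e0 : 0 <= e by apply: le_trans hfg.
have hfg' : -e <= f - g <= e.
  by rewrite -ler_norml.
case/andP: hfg' => h1 h2.
have [[a1 a2]|[[a1 a2]|[/andP[a1 a3] a2]]] := clip_cases g; rewrite a2;
have [[b1 b2]|[[b1 b2]|[/andP[b1 b3] b2]]] := clip_cases f; nra.
Qed.
Lemma net_number_spec {R : realType} {X : topologicalType} (A : set (X -> R)) e :
  (exists n, has_net A e n) -> has_net A e (net_number A e).
Proof.
move=> h; rewrite /net_number; case: pselect => [h'|//].
by case: ex_minnP => n /asboolP hn _.
Qed.

Lemma powR_invx {R : realType} (x r : R) : 0 <= x -> (x^-1) `^ r = (x `^ r)^-1.
Proof. by move=> x0; rewrite -powR_inv1 // -powRrM mulN1r powRN. Qed.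

Lemma powR_div {R : realType} (x y r : R) : 0 <= x -> 0 <= y ->
  (x / y) `^ r = x `^ r / y `^ r.
Proof. by move=> x0 y0; rewrite powRM ?invr_ge0 // powR_invx. Qed.

Lemma powR_split {R : realType} (x a b : R) : 0 < x -> a + b = 1 ->
  x = x `^ a * x `^ b.
Proof.
move=> x0 ab; rewrite -powRD ?ab ?powRr1 ?ltW //.
by rewrite (gt_eqF x0) implybT.
Qed.

Lemma epoch_alg {R : realType} (L l g lnK : R) : 0 < L -> 0 < l -> 0 < g ->
  lnK * ((L / l) `^ (1 / (g + 1))) `^ g < 2 * L ->
  32 * lnK + 5 * ((L / l) `^ (1 / (g + 1)) * l) <=
  69 * (L `^ (1 / (g + 1)) * l `^ (g / (g + 1))).
Proof.
move=> L0 l0 g0 h.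
have kt : 1 / (g + 1) + g / (g + 1) = 1 by field; lra.
have kt2 : 1 / (g + 1) * g = g / (g + 1) by rewrite mul1r mulrC.
rewrite -powRrM kt2 powR_div ?(ltW L0) ?(ltW l0) // in h.
rewrite powR_div ?(ltW L0) ?(ltW l0) //.
have eL := @powR_split _ _ _ _ L0 kt.
have el := @powR_split _ _ _ _ l0 kt.
rewrite [in X in _ < X]eL in h.
rewrite [in X in 5 * (_ * X)]el.
move: h.
set A := L `^ _; set B := L `^ _; set C := l `^ _; set D := l `^ _.
have A0 : 0 < A by rewrite powR_gt0.
have B0 : 0 < B by rewrite powR_gt0.
have C0 : 0 < C by rewrite powR_gt0.
have D0 : 0 < D by rewrite powR_gt0.
move=> h.
have e1 : B / D * (D * C) = B * C by field; rewrite lt0r_neq0.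
rewrite e1.
have h2 : lnK * A < 2 * (B * C) * A.
  have e : lnK * A = lnK * (A / C) * C by field; rewrite lt0r_neq0.
  have e2 : 2 * (B * C) * A = 2 * (B * A) * C by ring.
  by rewrite e e2 ltr_pM2r.
rewrite ltr_pM2r // in h2.
lra.
Qed.
Lemma geom_sum {R : realType} (a : nat -> R) :
  (forall j, 0 <= a j) -> (forall j, 2 * a j <= a j.+1) ->
  forall J, \sum_(j < J.+1) a j <= 2 * a J.
Proof.
move=> a0 a2; elim=> [|J IH]; first by rewrite big_ord_recr big_ord0 /= add0r; have := a0 0%N; lra.
rewrite big_ord_recr /=; have := a2 J; lra.
Qed.

Lemma ell_ratio {R : realType} (m : nat) (th : R) :
  0 < th -> 1 <= m%:R * th <= 2 ->
  forall j, 2 * ((2 ^ (m * j))%N%:R) `^ th <= ((2 ^ (m * j.+1))%N%:R) `^ th <=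
            4 * ((2 ^ (m * j))%N%:R) `^ th.
Proof.
move=> th0 /andP[h1 h2] j.
rewrite mulnS expnD natrM powRM // !natrX.
have e : ((2 : R) ^+ m) `^ th = (2 : R) `^ (m%:R * th).
  by rewrite powRrM powR_mulrn.
rewrite e.
have b1 : (2 : R) <= 2 `^ (m%:R * th).
  by rewrite -{1}(@powRr1 _ 2) // ler_powR // ler1n.
have b2 : (2 : R) `^ (m%:R * th) <= 4.
  have -> : (4 : R) = 2 `^ (2%:R) by rewrite powR_mulrn // expr2; lra.
  by rewrite ler_powR // ler1n.
have a0 : 0 <= ((2 : R) ^+ (m * j)) `^ th by apply: powR_ge0.
apply/andP; split; nra.
Qed.

Lemma big_N {R : realType} (M th : R) : 0 < th -> 0 <= M ->
  forall N : nat, ((Num.truncn (M `^ (1 / th))).+1 <= N)%N -> M <= N%:R `^ th.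
Proof.
move=> th0 M0 N hN.
have h : M `^ (1 / th) <= N%:R.
  apply: ltW; apply: lt_le_trans (truncnS_gt _) _; by rewrite ler_nat.
have := @ge0_ler_powR _ th (ltW th0) (M `^ (1 / th)) (N%:R).
rewrite !nnegrE powR_ge0 ler0n => /(_ isT isT h).
by rewrite -powRrM mul1r mulVf ?gt_eqF // powRr1.
Qed.

Lemma eps_small {R : realType} (L d g : R) (m : nat) : 0 < L -> 0 < d -> 0 < g -> (0 < m)%N ->
  forall j, ((Num.truncn ((L / (Num.min (d / 2) 1) `^ (g + 1))%R)).+1 <= j)%N ->
  (L / (2 ^ (m * j))%N%:R) `^ (1 / (g + 1)) < d /\
  (L / (2 ^ (m * j))%N%:R) `^ (1 / (g + 1)) <= 1.
Proof.
move=> L0 d0 g0 m0 j hj.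
set mm := Num.min (d / 2) 1.
have mm0 : 0 < mm by rewrite lt_min; apply/andP; split; lra.
have mmd : mm <= d / 2 by rewrite ge_min lexx.
have mm1 : mm <= 1 by rewrite ge_min lexx orbT.
set l := (2 ^ (m * j))%N%:R.
have jl : (j <= 2 ^ (m * j))%N.
  apply: leq_trans (ltnW (ltn_expl j (ltnSn 1))) _.
  by rewrite leq_pexp2l // leq_pmull.
have Q1 : L / mm `^ (g + 1) < l.
  apply: lt_le_trans (truncnS_gt _) _.
  by apply: le_trans _ (_ : j%:R <= l); rewrite ?ler_nat.
have p0 : 0 < mm `^ (g + 1) by apply: powR_gt0.
have l0 : 0 < l by apply: lt_trans Q1; apply: divr_gt0.
have Q2 : L / l < mm `^ (g + 1).
  by rewrite ltr_pdivrMr // mulrC -ltr_pdivrMr.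
have : (L / l) `^ (1 / (g + 1)) < (mm `^ (g + 1)) `^ (1 / (g + 1)).
  apply: gt0_ltr_powR => //; first by rewrite divr_gt0 //; lra.
  - by rewrite nnegrE divr_ge0 // ltW.
  - by rewrite nnegrE ltW.
rewrite -powRrM mul1r divff ?(powRr1 (ltW mm0)); last by rewrite gt_eqF //; lra.
move=> h; split; lra.
Qed.

Lemma ewa_mu_ext {R : realType} {K : nat} (p p' : nat -> 'I_K -> R) (y y' : nat -> R) a n :
  (forall s i, (s <= n)%N -> p s i = p' s i) -> (forall s, (s < n)%N -> y s = y' s) ->
  ewa_mu p y a n = ewa_mu p' y' a n.
Proof.
move=> hp hy.
have hw : forall i, ewa_w p y a n i = ewa_w p' y' a n i.
  move=> i; rewrite /ewa_w.
  have -> : \sum_(a <= s < n) (y s - p s i) ^+ 2 = \sum_(a <= s < n) (y' s - p' s i) ^+ 2.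
    by apply: eq_big_nat => s /andP[_ sn]; rewrite hy // hp // ltnW.
  by [].
rewrite /ewa_mu; congr (_ / _); apply: eq_bigr => i _; by rewrite hw ?hp.
Qed.

Local Open Scope classical_set_scope.

Theorem corollary7 (R : realType) :
  exists C : R,
  forall (X : topologicalType) (F : set (X -> R)) (gamma L : R),
    [set: X] !=set0 ->
    (forall f, F f -> bounded_continuous f) ->
    @compact {uniform X -> R} F ->
    0 < gamma ->
    limsup0 (fun e => metric_entropy F e * e `^ gamma) = L%:E ->
    0 < L ->
    exists S : strategy R X,
    forall f, F f ->
    exists N0 : nat, forall N : nat, (N0 <= N)%N ->
    forall (x : nat -> X) (y : nat -> R), (forall n, -1 <= y n <= 1) ->
      \sum_(n < N) (y n - pred_move S x y n) ^+ 2
      <= \sum_(n < N) (y n - f (x n)) ^+ 2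
         + C * L `^ (1 / (gamma + 1)) * N%:R `^ (gamma / (gamma + 1)).
Proof.
exists 600.
move=> X F gamma L hX hbc hcomp hg hlim hL.
have nets : forall e : R, 0 < e -> exists n, has_net F e n.
  move=> e0 e0p; apply: contrapT => hno.
  have hno' : forall e, 0 < e < e0 -> metric_entropy F e * e `^ gamma = 0.
    move=> e /andP[ep ee].
    rewrite /metric_entropy /net_number; case: pselect => [[n [g [hg1 hg2]]]|_].
      exfalso; apply: hno; exists n, g; split => // f hf.
      have [i hi] := hg2 f hf; exists i => x; apply: le_trans (hi x) _; exact: ltW.
    by rewrite ln0 // !mul0r.
  have : (L%:E <= 0%:E)%E.
    rewrite -hlim /limsup0.
    apply: le_trans (ereal_inf_lbound _) _; first by exists e0.
    apply: ub_ereal_sup => _ [e he <-]; rewrite hno' //.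
  by rewrite lee_fin; lra.
have [d d0 hd] : exists2 d : R, 0 < d &
    (forall e : R, 0 < e < d -> metric_entropy F e * e `^ gamma < 2 * L)%R.
  have : (limsup0 (fun e => (metric_entropy F e * e `^ gamma)%R) < (2 * L)%:E)%E.
    by rewrite hlim lte_fin; lra.
  move=> /ereal_inf_lt [_ [d' d0 <-] hlt].
  exists d' => // e he.
  rewrite -lte_fin; apply: le_lt_trans hlt; apply: ereal_sup_ubound; by exists e.
pose th := gamma / (gamma + 1).
pose ka := 1 / (gamma + 1).
have th0 : 0 < th by rewrite /th divr_gt0 //; lra.
have ka0 : 0 < ka by rewrite /ka divr_gt0 //; lra.
pose m := (Num.truncn (1 / th)).+1.
have mth : 1 <= m%:R * th <= 2.
  have h1 := truncnS_gt (1 / th).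
  have h2 : (Num.truncn (1 / th))%:R <= 1 / th by rewrite truncn_le divr_ge0 // ltW.
  have th1 : th <= 1 by rewrite /th ler_pdivrMr; lra.
  rewrite /m; apply/andP; split.
    by move: h1; rewrite ltr_pdivrMr // => /ltW.
  move: h2; rewrite ler_pdivlMr // -addn1 natrD mulrDl !mul1r => h2; lra.
have m0 : (0 < m)%N by [].
pose ell j := (2 ^ (m * j))%N.
have ell0 : forall j, (0 < ell j)%N by move=> j; rewrite expn_gt0.
pose T j := (\sum_(i < j) ell i)%N.
have TS : forall j, T j.+1 = (T j + ell j)%N by move=> j; rewrite /T big_ord_recr.
have Tmono : forall i j, (i <= j)%N -> (T i <= T j)%N.
  move=> i j /subnK <-; elim: (j - i)%N => [|k IH] //.
  by rewrite addSn TS; apply: leq_trans IH (leq_addr _ _).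
have Tgt : forall n, (n < T n.+1)%N.
  elim=> [|n IH]; first by rewrite TS (_ : T 0 = 0%N) ?add0n ?ell0 // /T big_ord0.
  by rewrite TS -addn1; apply: leq_add IH (ell0 _).
pose ep n := @ex_minn (fun j => (n < T j.+1)%N) (ex_intro _ n (Tgt n)).
have epP : forall n, (T (ep n) <= n < T (ep n).+1)%N.
  move=> n; rewrite /ep; case: ex_minnP => e he hmin; rewrite he andbT.
  case: e he hmin => [|e] he hmin; first by rewrite /T big_ord0.
  by rewrite leqNgt; apply/negP => /hmin; rewrite ltnn.
have ep_eq : forall j n, (T j <= n < T j.+1)%N -> ep n = j.
  move=> j n /andP[h1 h2]; have /andP[h3 h4] := epP n.
  apply/eqP; rewrite eqn_leq; apply/andP; split.
    rewrite leqNgt; apply/negP => hj.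
    by have := Tmono _ _ hj; rewrite leqNgt (leq_ltn_trans h3 h2).
  rewrite leqNgt; apply/negP => hj.
  by have := Tmono _ _ hj; rewrite leqNgt (leq_ltn_trans h1 h4).
pose eps j := (L / (ell j)%:R) `^ ka.
have eps0 : forall j, 0 < eps j by move=> j; rewrite powR_gt0 // divr_gt0 // ltr0n.
pose K j := net_number F (eps j).
have gdef : forall j, {g : 'I_(K j) -> X -> R | (forall i, F (g i)) /\
    forall f, F f -> exists i, sup_close (eps j) f (g i)}.
  move=> j; apply: cid; have := net_number_spec _ _ (nets (eps j) (eps0 j)); by [].
pose gg j := proj1_sig (gdef j).
pose S : strategy R X := fun h xn =>
  ewa_mu (fun s i => clip (gg (ep (size h)) i (nth (xn, 0) h s).1))
         (fun s => (nth (xn, 0) h s).2) (T (ep (size h))) (size h).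
exists S.
have pmE : forall x y n, pred_move S x y n =
    ewa_mu (fun s i => clip (gg (ep n) i (x s))) y (T (ep n)) n.
  move=> x y n; rewrite /pred_move /S size_map size_iota.
  apply: ewa_mu_ext => [s i sn|s sn].
    rewrite leq_eqVlt in sn; case/orP: sn => [/eqP ->|sn].
      by rewrite nth_default // size_map size_iota.
    by rewrite (nth_map 0%N) ?size_iota // nth_iota.
  by rewrite (nth_map 0%N) ?size_iota // nth_iota.
have pm1 : forall x y n, -1 <= pred_move S x y n <= 1.
  by move=> x y n; rewrite pmE; apply: ewa_mu_itv => s i; exact: clip_itv.
move=> f hf.
pose j0 := (Num.truncn ((L / (Num.min (d / 2) 1) `^ (gamma + 1))%R)).+1.
have good : forall j, (j0 <= j)%N -> eps j < d /\ eps j <= 1.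
  by move=> j hj; exact: (eps_small L d gamma m hL d0 hg m0 j hj).
have ln2 : 0 < ln (2:R) <= 1.
  apply/andP; split.
    by rewrite -ln1 ltr_ln ?posrE //; lra.
  rewrite -[X in _ <= X](expRK 1) ler_ln ?posrE ?expR_gt0 //.
  have := expR_ge1Dx (1:R); lra.
have epochb : forall x y, (forall n, -1 <= y n <= 1) -> forall j N, (j0 <= j)%N ->
    (T j <= N <= T j.+1)%N ->
    \sum_(T j <= n < N) ((y n - pred_move S x y n) ^+ 2 - (y n - f (x n)) ^+ 2)
    <= 69 * (L `^ ka * (ell j)%:R `^ th).
  move=> x y hy j N hj /andP[h1 h2].
  have [ed e1] := good j hj.
  have [_ hnet] := proj2_sig (gdef j).
  have [i0 hi0] := hnet f hf.
  rewrite sumrB.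
  have -> : \sum_(T j <= n < N) (y n - pred_move S x y n) ^+ 2 =
      \sum_(T j <= n < N) (y n - ewa_mu (fun s i => clip (gg j i (x s))) y (T j) n) ^+ 2.
    apply: eq_big_nat => n /andP[n1 n2].
    have hep : ep n = j by apply: ep_eq; rewrite n1 (leq_trans n2 h2).
    by rewrite pmE hep.
  have r : \sum_(T j <= n < N) (y n - ewa_mu (fun s i => clip (gg j i (x s))) y (T j) n) ^+ 2
      <= \sum_(T j <= n < N) (y n - clip (gg j i0 (x n))) ^+ 2 + 32 * ln (K j)%:R :=
    ewa_regret (fun s i => clip (gg j i (x s))) y (T j) N i0 (fun s i => clip_itv _) hy h1.
  have c : \sum_(T j <= n < N) (y n - clip (gg j i0 (x n))) ^+ 2 <=
      \sum_(T j <= n < N) ((y n - f (x n)) ^+ 2 + 5 * eps j).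
    by apply: ler_sum => n _; apply: clip_cmp => //; apply: hi0.
  rewrite big_split /= sumr_const_nat in c.
  have c2 : (5 * eps j) *+ (N - T j) <= 5 * (eps j * (ell j)%:R).
    rewrite -mulr_natr mulrA ler_pM2l ?mulr_gt0 ?eps0 // ler_nat leq_subLR -TS.
    exact: h2.
  have me : ln (K j)%:R / ln 2 * eps j `^ gamma < 2 * L.
    by apply: hd; rewrite eps0 ed.
  have hk : ln (K j)%:R * eps j `^ gamma < 2 * L.
    have e : ln (K j)%:R * eps j `^ gamma = (ln (K j)%:R / ln 2 * eps j `^ gamma) * ln 2.
      by field; case/andP: ln2 => l1 _; rewrite gt_eqF.
    rewrite e; move: me; set q := _ * _; case/andP: ln2 => l1 l2 me; nra.
  have ea : 32 * ln (K j)%:R + 5 * (eps j * (ell j)%:R) <= 69 * (L `^ ka * (ell j)%:R `^ th).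
    have l0 : (0:R) < (ell j)%:R by rewrite ltr0n.
    exact: (@epoch_alg R L (ell j)%:R gamma (ln (K j)%:R) hL l0 hg hk).
  lra.
have Sge0 : forall J, 0 <= 69 * L `^ ka * \sum_(j < J) (ell j)%:R `^ th.
  move=> J; apply: mulr_ge0; first by rewrite mulr_ge0 ?powR_ge0.
  by apply: sumr_ge0 => j _; apply: powR_ge0.
have cumul : forall x y, (forall n, -1 <= y n <= 1) -> forall J N,
    (T J <= N <= T J.+1)%N -> (T j0 <= N)%N ->
    \sum_(T j0 <= n < N) ((y n - pred_move S x y n) ^+ 2 - (y n - f (x n)) ^+ 2)
    <= 69 * L `^ ka * \sum_(j < J.+1) (ell j)%:R `^ th.
  move=> x y hy; elim=> [|J IH] N /andP[h1 h2] h3.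
    have [j00|j0p] := eqVneq j0 0%N.
      rewrite big_ord_recr big_ord0 /= add0r -mulrA.
      by rewrite j00; apply: epochb => //; rewrite ?j00 // h1 h2.
    rewrite big_geq //; apply: leq_trans h2 _; apply: Tmono; by rewrite lt0n.
  case: (ltnP J.+1 j0) => hJ.
    by rewrite big_geq //; apply: leq_trans h2 _; apply: Tmono.
  rewrite (@big_cat_nat _ _ _ (T J.+1)) //=; last by apply: Tmono.
  rewrite big_ord_recr /= mulrDr.
  apply: lerD.
    apply: IH => //; last by apply: Tmono.
    by rewrite leqnn andbT; apply: Tmono.
  by rewrite -mulrA; apply: epochb => //; rewrite h1 h2.
have sumA : forall J N, (T J < N)%N ->
    \sum_(j < J.+1) (ell j)%:R `^ th <= 8 * N%:R `^ th.
  move=> J N hJN.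
  have hr := ell_ratio m th th0 mth.
  have g : \sum_(j < J.+1) (ell j)%:R `^ th <= 2 * (ell J)%:R `^ th.
    apply: (geom_sum (fun j => (ell j)%:R `^ th)) => j; first exact: powR_ge0.
    by case/andP: (hr j).
  suff : (ell J)%:R `^ th <= 4 * N%:R `^ th by move=> h; lra.
  have N1 : (1:R) <= N%:R by rewrite ler1n; apply: leq_ltn_trans hJN.
  have mono : forall u v : R, 0 <= u -> u <= v -> u `^ th <= v `^ th.
    move=> u v u0 uv; apply: ge0_ler_powR; rewrite ?nnegrE ?(ltW th0) //.
    exact: le_trans uv.
  case: J hJN g => [|J] hJN g.
    rewrite /ell muln0 expn0 powR1.
    have := mono 1 N%:R ler01 N1; rewrite powR1 => h.
    have := powR_ge0 (N%:R : R) th; lra.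
  have h4 := proj2 (andP (hr J)).
  have h5 : (ell J)%:R `^ th <= N%:R `^ th.
    apply: mono => //; rewrite ler_nat; apply: leq_trans (ltnW hJN).
    by rewrite TS leq_addl.
  have : (ell J.+1)%:R `^ th <= 4 * (ell J)%:R `^ th by exact: h4.
  lra.
pose Nb := (Num.truncn ((4 * (T j0)%:R / L `^ ka) `^ (1 / th))).+1.
exists (maxn (T j0) Nb).
move=> N hN x y hy.
have hN1 : (T j0 <= N)%N := leq_trans (leq_maxl _ _) hN.
have hN2 : (Nb <= N)%N := leq_trans (leq_maxr _ _) hN.
have N0 : (0 < N)%N := leq_trans (ltn0Sn _) hN2.
have Lk0 : 0 < L `^ ka := powR_gt0 _ hL.
have hbig : 4 * (T j0)%:R / L `^ ka <= N%:R `^ th.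
  have M0 : 0 <= 4 * (T j0)%:R / L `^ ka.
    by apply: divr_ge0; [apply: mulr_ge0 | apply: ltW].
  exact: (big_N _ th th0 M0 N hN2).
have hbig2 : 4 * (T j0)%:R <= L `^ ka * N%:R `^ th.
  by move: hbig; rewrite ler_pdivrMr // [X in _ <= X]mulrC.
have /andP[hJ1 hJ2] := epP N.-1.
set J := ep N.-1 in hJ1 hJ2.
have hJN : (T J < N)%N by apply: leq_ltn_trans hJ1 _; rewrite prednK.
have hJN2 : (N <= T J.+1)%N by rewrite -(prednK N0).
have key : \sum_(0 <= n < N) ((y n - pred_move S x y n) ^+ 2 - (y n - f (x n)) ^+ 2)
    <= 600 * L `^ ka * N%:R `^ th.
  rewrite (@big_cat_nat _ _ _ (T j0)) //=.
  have p1 : \sum_(0 <= n < T j0) ((y n - pred_move S x y n) ^+ 2 - (y n - f (x n)) ^+ 2)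
      <= \sum_(0 <= n < T j0) (4 : R).
    apply: ler_sum => n _.
    have := pm1 x y n; have := hy n; have := sqr_ge0 (y n - f (x n)).
    move=> s /andP[a1 a2] /andP[b1 b2]; nra.
  have p1' : \sum_(0 <= n < T j0) (4 : R) = 4 * (T j0)%:R by rewrite sumr_const_nat subn0 mulr_natr.
  rewrite p1' in p1.
  have p2 := cumul x y hy J N (introT andP (conj (ltnW hJN) hJN2)) hN1.
  have p3 := sumA J N hJN.
  have p4 : 69 * L `^ ka * \sum_(j < J.+1) (ell j)%:R `^ th <= 69 * L `^ ka * (8 * N%:R `^ th).
    by rewrite ler_pM2l // mulr_gt0.
  have p5 := powR_ge0 (N%:R : R) th.

  set P := L `^ ka * N%:R `^ th in hbig2.
  have eP : 69 * L `^ ka * (8 * N%:R `^ th) = 552 * P by rewrite /P; ring.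
  have eP2 : 600 * L `^ ka * N%:R `^ th = 600 * P by rewrite /P; ring.
  rewrite eP in p4; rewrite eP2.
  have P0 : 0 <= P by rewrite /P mulr_ge0 ?powR_ge0.
  lra.
move: key; rewrite sumrB !big_mkord => key.
rewrite -/ka -/th; lra.
Qed.
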